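(* Let $\Omega\subset\mathbb{R}^2$ be open and bounded with piecewise-smooth boundary $\Gamma$, let $\beta_x,\beta_y\in\mathbb{R}$, and let $\Gamma_-=\{(x,y)\in\Gamma:\beta_xn_x+\beta_yn_y<0\}$, $\Gamma_+=\Gamma\setminus\Gamma_-$. Let $D_x=H^{-1}Q_x$ and $D_y=H^{-1}Q_y$ be SBP operators (with a common norm matrix $H$) for $\partial/\partial x$ and $\partial/\partial y$ on a node set $S$, with boundary matrices $E_x,E_y$, and suppose $\beta_xE_x+\beta_yE_y=E_++E_-$ where $E_+$ is symmetric positive semi-definite, $E_-$ is symmetric negative semi-definite, and $\mathbf{p}_k^TE_\pm\mathbf{p}_m=\oint_{\Gamma_\pm}\mathcal{P}_k\mathcal{P}_m(\beta_xn_x+\beta_yn_y)\,d\Gamma$ for all $k,m\in\{1,\dots,\eta_\tau\}$. Let $\mathbf{u}(t)$ solve $$\frac{d\mathbf{u}}{dt}+\beta_xD_x\mathbf{u}+\beta_yD_y\mathbf{u}=\sigma H^{-1}E_-(\mathbf{u}-\mathbf{u}_{bc})$$ with homogeneous boundary data $\mathbf{u}_{bc}=\mathbf{0}$ and bounded initial condition. If $\sigma\ge\tfrac12$, then $\|\mathbf{u}\|_H=\sqrt{\mathbf{u}^TH\mathbf{u}}$ is non-increasing in $t$.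
   Context: Monomial basis: $\mathcal{P}_k(x,y)=x^{i}y^{j-i}$ with $k=j(j+1)/2+i+1$, $0\le i\le j$; $\mathcal{P}_1,\dots,\mathcal{P}_{\eta_q}$ are the monomials of total degree at most $q$, $\eta_q=(q+1)(q+2)/2$. $\mathbf{p}_k$ is the vector of values of $\mathcal{P}_k$ at the nodes. $(n_x,n_y)$ is the outward unit normal on $\Gamma$. Definition (SBP operator): an $n\times n$ matrix $D_x$ is a degree $p$ SBP approximation of $\partial/\partial x$ on nodes $S$ if (1) $D_x\mathbf{p}_k=\mathbf{p}_k'$ for all $k\le\eta_p$, where $\mathbf{p}_k'$ holds the values of $\partial\mathcal{P}_k/\partial x$ at the nodes; (2) $D_x=H^{-1}Q_x$ with $H$ symmetric positive definite; (3) $Q_x=Q_x^A+\tfrac12E_x$ with $(Q_x^A)^T=-Q_x^A$, $E_x^T=E_x$, and $\mathbf{p}_k^TE_x\mathbf{p}_m=\oint_\Gamma\mathcal{P}_k\mathcal{P}_mn_x\,d\Gamma$ for all $k,m\le\eta_\tau$, for some integer $\tau\ge p$. The $y$-version uses $\partial/\partial y$ and $n_y$ with matrices $D_y,Q_y,Q_y^A,E_y$. *)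

(* Defs.v *)
From HB Require Import structures.
From mathcomp Require Import all_boot all_order all_algebra.
From mathcomp Require Import all_classical all_reals all_analysis.
Set Implicit Arguments. Unset Strict Implicit. Unset Printing Implicit Defensive.
Import Order.TTheory GRing.Theory Num.Theory.
Import numFieldNormedType.Exports.
Local Open Scope classical_set_scope.
Local Open Scope ring_scope.

Section Defs.
Variable R : realType.

Definition qform n (A : 'M[R]_n) (v : 'cV[R]_n) : R := (v^T *m A *m v) 0 0.
Definition bform n (A : 'M[R]_n) (v w : 'cV[R]_n) : R := (v^T *m A *m w) 0 0.
Definition symmetric_mx n (A : 'M[R]_n) : Prop := A^T = A.
Definition skew_mx n (A : 'M[R]_n) : Prop := A^T = - A.
Definition posdef_mx n (A : 'M[R]_n) : Prop :=
  symmetric_mx A /\ forall v : 'cV[R]_n, v != 0 -> 0 < qform A v.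
Definition psd_mx n (A : 'M[R]_n) : Prop :=
  symmetric_mx A /\ forall v : 'cV[R]_n, 0 <= qform A v.
Definition nsd_mx n (A : 'M[R]_n) : Prop :=
  symmetric_mx A /\ forall v : 'cV[R]_n, qform A v <= 0.
Definition Hnorm n (H : 'M[R]_n) (u : 'cV[R]_n) : R := Num.sqrt (qform H u).

(* The monomial P_k with k = j(j+1)/2 + i + 1, 0 <= i <= j, is x^i y^(j-i);
   "k <= eta_q" is equivalent to "j <= q".  We index monomials by (i, j). *)
Definition mono (i j : nat) (x y : R) : R := x ^+ i * y ^+ (j - i).
Definition dx_mono (i j : nat) (x y : R) : R := i%:R * x ^+ i.-1 * y ^+ (j - i).
Definition dy_mono (i j : nat) (x y : R) : R :=
  (j - i)%:R * x ^+ i * y ^+ (j - i).-1.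

Definition nodevec n (xs ys : 'I_n -> R) (f : R -> R -> R) : 'cV[R]_n :=
  \col_l f (xs l) (ys l).

(* A boundary piece is a C^1 curve t |-> (gx t, gy t), t in [0,1],
   oriented so that (gy', -gx') is an outward normal (times the speed). *)
Record piece := Piece { gx : R -> R; gy : R -> R }.

Definition C1 (f : R -> R) : Prop :=
  (forall t, derivable f t 1) /\ continuous (derive1 f).

Definition ppoint (c : piece) (t : R) : R * R := (gx c t, gy c t).
(* normal vector times speed: (n_x, n_y) |gamma'| *)
Definition nxs (c : piece) (t : R) : R := derive1 (gy c) t.
Definition nys (c : piece) (t : R) : R := - derive1 (gx c) t.

Definition pc (G : seq piece) (k : nat) : piece := nth (Piece id id) G k.

Definition bounded_set2 (O : set (R * R)) : Prop :=
  exists M : R, forall z, O z -> `|z.1| <= M /\ `|z.2| <= M.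

Definition pw_smooth_boundary (Om : set (R * R)) (G : seq piece) : Prop :=
  [/\ open Om /\ bounded_set2 Om,
      (forall k : 'I_(size G), let c := pc G k in [/\ C1 (gx c), C1 (gy c) &
           forall t, (t \in `[0, 1]) -> (nxs c t, nys c t) != (0, 0)]),
      closure Om `\` Om =
        [set z | exists (k : 'I_(size G)) t, let c := pc G k in (t \in `[0, 1]) /\ z = ppoint c t],
      (forall (a b : 'I_(size G)) s t, (s \in `]0, 1[) -> (t \in `]0, 1[) ->
          ppoint (pc G a) s = ppoint (pc G b) t ->
          a = b /\ s = t)
    &
      (forall (k : 'I_(size G)) t, let c := pc G k in (t \in `]0, 1[) ->
          exists2 e0 : R, 0 < e0 & forall e, 0 < e < e0 ->
            ~ Om (gx c t + e * nxs c t, gy c t + e * nys c t) /\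
              Om (gx c t - e * nxs c t, gy c t - e * nys c t))].

(* \oint_Gamma f n_x dGamma,  \oint_Gamma f n_y dGamma *)
Definition bint_x (G : seq piece) (f : R -> R -> R) : R :=
  \sum_(c <- G) Rintegral lebesgue_measure `[0, 1]
     (fun t => f (gx c t) (gy c t) * nxs c t).
Definition bint_y (G : seq piece) (f : R -> R -> R) : R :=
  \sum_(c <- G) Rintegral lebesgue_measure `[0, 1]
     (fun t => f (gx c t) (gy c t) * nys c t).

Definition bdotn (bx by_ : R) (c : piece) (t : R) : R :=
  bx * nxs c t + by_ * nys c t.
(* \oint_{Gamma_-} f (beta.n) dGamma, Gamma_- = {beta.n < 0} *)
Definition bint_minus (bx by_ : R) (G : seq piece) (f : R -> R -> R) : R :=
  \sum_(c <- G) Rintegral lebesgue_measure `[0, 1]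
     (fun t => if bdotn bx by_ c t < 0
               then f (gx c t) (gy c t) * bdotn bx by_ c t else 0).
(* \oint_{Gamma_+} f (beta.n) dGamma, Gamma_+ = Gamma \ Gamma_- *)
Definition bint_plus (bx by_ : R) (G : seq piece) (f : R -> R -> R) : R :=
  \sum_(c <- G) Rintegral lebesgue_measure `[0, 1]
     (fun t => if bdotn bx by_ c t < 0
               then 0 else f (gx c t) (gy c t) * bdotn bx by_ c t).

(* Generic degree-p SBP operator with exactness degree tau for a derivative
   (dmono = derivative of monomials) and boundary functional
   bnd f = \oint_Gamma f n dGamma. *)
Definition SBP_gen n (xs ys : 'I_n -> R) (p tau : nat)
    (dmono : nat -> nat -> R -> R -> R) (bnd : (R -> R -> R) -> R)
    (D H Q QA E : 'M[R]_n) : Prop :=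
  [/\ (forall i j, (i <= j <= p)%N ->
         D *m nodevec xs ys (mono i j) = nodevec xs ys (dmono i j)),
      D = invmx H *m Q /\ posdef_mx H,
      Q = QA + 2^-1 *: E /\ skew_mx QA /\ symmetric_mx E &
      forall i j i' j', (i <= j <= tau)%N -> (i' <= j' <= tau)%N ->
        bform E (nodevec xs ys (mono i j)) (nodevec xs ys (mono i' j')) =
        bnd (fun x y => mono i j x y * mono i' j' x y)].

Definition SBP_x n (G : seq piece) (xs ys : 'I_n -> R) (p tau : nat)
  (D H Q QA E : 'M[R]_n) : Prop := SBP_gen xs ys p tau dx_mono (bint_x G) D H Q QA E.
Definition SBP_y n (G : seq piece) (xs ys : 'I_n -> R) (p tau : nat)
  (D H Q QA E : 'M[R]_n) : Prop := SBP_gen xs ys p tau dy_mono (bint_y G) D H Q QA E.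

Definition vderivable n (u : R -> 'cV[R]_n) (t : R) : Prop :=
  forall l, derivable (fun s => u s l 0) t 1.
Definition vderive n (u : R -> 'cV[R]_n) (t : R) : 'cV[R]_n :=
  \col_l derive1 (fun s => u s l 0) t.

End Defs.

(* Main.v *)
Require Import Defs.
From HB Require Import structures.
From mathcomp Require Import all_boot all_order all_algebra.
From mathcomp Require Import all_classical all_reals all_analysis.
From mathcomp Require Import lra.
Import Order.TTheory GRing.Theory Num.Theory.
Import numFieldNormedType.Exports.
Local Open Scope classical_set_scope.
Local Open Scope ring_scope.

Set Implicit Arguments. Unset Strict Implicit.
Section Aux.
Variable R : realType.
Implicit Types (n : nat).

Definition ip n (v z : 'cV[R]_n) : R := (v^T *m z) 0 0.

Lemma ipD n (v a b : 'cV[R]_n) : ip v (a + b) = ip v a + ip v b.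
Proof. by rewrite /ip mulmxDr mxE. Qed.
Lemma ipN n (v a : 'cV[R]_n) : ip v (- a) = - ip v a.
Proof. by rewrite /ip mulmxN mxE. Qed.
Lemma ipZ n (v a : 'cV[R]_n) c : ip v (c *: a) = c * ip v a.
Proof. by rewrite /ip -scalemxAr mxE. Qed.
Lemma ipB n (v a b : 'cV[R]_n) : ip v (a - b) = ip v a - ip v b.
Proof. by rewrite ipD ipN. Qed.
Lemma bform_ip n (A : 'M[R]_n) v w : bform A v w = ip v (A *m w).
Proof. by rewrite /bform /ip mulmxA. Qed.
Lemma qformE n (A : 'M[R]_n) v : qform A v = ip v (A *m v).
Proof. by rewrite /qform /ip mulmxA. Qed.

Lemma tr11 (M : 'M[R]_1) : M 0 0 = M^T 0 0.
Proof. by rewrite mxE. Qed.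

Lemma bformC n (A : 'M[R]_n) v w : symmetric_mx A -> bform A w v = bform A v w.
Proof.
move=> sA; rewrite /bform tr11 !trmx_mul trmxK sA mulmxA //.
Qed.

Lemma qform_skew n (A : 'M[R]_n) v : skew_mx A -> qform A v = 0.
Proof.
move=> sA; have : qform A v = - qform A v.
  rewrite /qform {1}tr11 !trmx_mul trmxK sA mulNmx mulmxN mxE mulmxA //.
move/eqP; rewrite -subr_eq0 opprK -mulr2n -mulr_natl mulf_eq0 pnatr_eq0 /=.
by move/eqP.
Qed.

Lemma qformD n (A B : 'M[R]_n) v : qform (A + B) v = qform A v + qform B v.
Proof. by rewrite !qformE mulmxDl ipD. Qed.
Lemma qformZ n (A : 'M[R]_n) c v : qform (c *: A) v = c * qform A v.
Proof. by rewrite !qformE -scalemxAl ipZ. Qed.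

Lemma posdef_unit n (A : 'M[R]_n) : posdef_mx A -> A \in unitmx.
Proof.
case=> _ pd; rewrite unitmxE unitfE; apply/negP => /det0P [v v0 vA].
have : v^T != 0 by rewrite trmx_eq0.
move/pd; rewrite /qform trmxK vA mul0mx mxE ltxx //.
Qed.
Lemma bform_sum n (A : 'M[R]_n) v w :
  bform A v w = \sum_i \sum_j A i j * (v i 0 * w j 0).
Proof.
rewrite /bform mxE (exchange_big) /=; apply: eq_bigr => i _.
rewrite mxE big_distrl /=; apply: eq_bigr => j _.
by rewrite !mxE [v _ _ * _]mulrC -mulrA.
Qed.
Lemma is_derive_qform n (A : 'M[R]_n) (u : R -> 'cV[R]_n) (t : R) (w : 'cV[R]_n) :
  (forall l, is_derive t (1:R) (fun s => u s l 0) (w l 0)) ->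
  is_derive t (1:R) (fun s => qform A (u s)) (bform A (u t) w + bform A w (u t)).
Proof.
move=> du.
have -> : (fun s => qform A (u s)) =
   \sum_(i < n) \sum_(j < n) (A i j \*: ((fun s => u s i 0) * (fun s => u s j 0))).
  apply/funext => s; rewrite /qform -/(bform _ _ _) bform_sum fct_sumE.
  apply: eq_bigr => i _; rewrite fct_sumE; apply: eq_bigr => j _ //.
apply: is_derive_eq.
rewrite !bform_sum -big_split /=; apply: eq_bigr => i _.
rewrite -big_split /=; apply: eq_bigr => j _.
rewrite /GRing.scale /= -mulrDr; congr (_ * _).
by rewrite [w i 0 * _]mulrC.
Qed.
Lemma cont_qform n (A : 'M[R]_n) (u : R -> 'cV[R]_n) (D : set R) :
  (forall l, {within D, continuous (fun s => u s l 0)}) ->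
  {within D, continuous (fun s => qform A (u s))}.
Proof.
move=> cu.
have -> : (fun s => qform A (u s)) =
   (fun s => \sum_(i < n) \sum_(j < n) A i j * (u s i 0 * u s j 0)).
  by apply/funext => s; rewrite /qform -/(bform _ _ _) bform_sum.
apply: continuous_big => [|i _]; first exact: add_continuous.
apply: continuous_big => [|j _]; first exact: add_continuous.
move=> x.
have h1 : {for x, continuous (fun _ : subspace D => A i j)} by exact: cst_continuous.
have h2 : {for x, continuous (fun y : subspace D => u y i 0 * u y j 0)}.
  have := @continuousM R (subspace D) (fun y => u y i 0) (fun y => u y j 0) x (cu i x) (cu j x).
  exact.
have := @continuousM R (subspace D) _ _ x h1 h2.
exact.
Qed.
End Aux.

Theorem theorem3p5 (R : realType) (Om : set (R * R)) (G : seq (piece R))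
  (bx by_ : R) (n p tau : nat) (xs ys : 'I_n -> R)
  (H Dx Qx QAx Ex Dy Qy QAy Ey Ep Em : 'M[R]_n)
  (sigma : R) (u : R -> 'cV[R]_n) :
  pw_smooth_boundary Om G ->
  (p <= tau)%N ->
  SBP_x G xs ys p tau Dx H Qx QAx Ex ->
  SBP_y G xs ys p tau Dy H Qy QAy Ey ->
  bx *: Ex + by_ *: Ey = Ep + Em ->
  psd_mx Ep -> nsd_mx Em ->
  (forall i j i' j', (i <= j <= tau)%N -> (i' <= j' <= tau)%N ->
     bform Ep (nodevec xs ys (mono i j)) (nodevec xs ys (mono i' j')) =
     bint_plus bx by_ G (fun x y => mono i j x y * mono i' j' x y)) ->
  (forall i j i' j', (i <= j <= tau)%N -> (i' <= j' <= tau)%N ->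
     bform Em (nodevec xs ys (mono i j)) (nodevec xs ys (mono i' j')) =
     bint_minus bx by_ G (fun x y => mono i j x y * mono i' j' x y)) ->
  (* u solves the semi-discrete problem for t > 0 with u_bc = 0,
     and is continuous on [0, +oo) *)
  (forall l, {within `[0, +oo[, continuous (fun s => u s l 0)}) ->
  (forall t, 0 < t -> vderivable u t /\
     vderive u t + bx *: (Dx *m u t) + by_ *: (Dy *m u t) =
     sigma *: (invmx H *m (Em *m (u t - 0)))) ->
  2^-1 <= sigma ->
  forall s t, 0 <= s -> s <= t -> Hnorm H (u t) <= Hnorm H (u s).
Proof.
move=> _ _ [_ [DxE Hpd] [QxE [skx _]] _] [_ [DyE _] [QyE [sky _]] _]
  Esplit [_ Ep0] [_ Em0] _ _ cont deq sig s t s0 st.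
rewrite /Hnorm; apply: ler_wsqrtr.
have Hu := posdef_unit Hpd.
have Hsym : symmetric_mx H by case: Hpd.
have dU (x : R) : 0 < x -> is_derive x (1:R) (fun s => qform H (u s))
    (bform H (u x) (vderive u x) + bform H (vderive u x) (u x)).
  move=> x0; apply: is_derive_qform => l.
  have [dv _] := deq x x0.
  rewrite mxE derive1E; exact: derivableP (dv l).
apply: (@ler0_derive1_nincry R (fun s => qform H (u s)) 0) => //.
- move=> x; rewrite in_itv /= andbT => x0.
  by have := dU x x0; case.
- move=> x; rewrite in_itv /= andbT => x0.
  rewrite derive1E (@derive_val _ _ _ _ _ _ _ (dU x x0)).
  have [_ e] := deq x x0.
  set v := u x in e *; set w := vderive u x in e *.
  have we : w = invmx H *m (sigma *: (Em *m v) - bx *: (Qx *m v) - by_ *: (Qy *m v)).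
    rewrite subr0 in e.
    rewrite DxE DyE -!mulmxA in e.
    rewrite !mulmxBr -!scalemxAr.
    by rewrite -e addrAC addrK addrK.
  rewrite (bformC v w Hsym) bform_ip we mulmxA mulmxV // mul1mx.
  rewrite !ipB !ipZ -!qformE QxE QyE !qformD !qformZ (qform_skew _ skx) (qform_skew _ sky).
  have hs : bx * qform Ex v + by_ * qform Ey v = qform Ep v + qform Em v.
    by rewrite -(qformZ Ex) -(qformZ Ey) -[LHS]qformD Esplit qformD.
  have h1 := Ep0 v; have h2 := Em0 v.
  have h3 : (2 * sigma - 1) * qform Em v <= 0.
    apply: mulr_ge0_le0 => //; lra.
  nra.
- exact (@cont_qform R n H u _ cont).
Qed.
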